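(* Let $A$ be a nonzero commutative nilpotent $\mathbb{F}_p$-algebra of finite dimension with $A^e\ne0$, $A^{e+1}=0$. For $1\le r\le e$ let $t_r=\dim_{\mathbb{F}_p}(N_r/N_{r-1})$. Then the number $i(A)$ of ideals of $A$ satisfies \[ i(A)\ge \lambda(A):=s(t_1)+\sum_{r=2}^{e}\bigl(s(t_r)-1\bigr), \] where $s(m)$ denotes the number of subspaces of an $m$-dimensional $\mathbb{F}_p$-vector space.
   Context: Algebras are commutative, associative, not necessarily unital. $N_k=\{a\in A: x_1\cdots x_k a=0\ \forall x_1,\dots,x_k\in A\}$, $N_0=0$, so $0\subset N_1\subset\cdots\subset N_e=A$. *)

(* Defs.v *)
From HB Require Import structures.
From mathcomp Require Import all_boot all_order all_algebra all_field.
Set Implicit Arguments. Unset Strict Implicit. Unset Printing Implicit Defensive.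
Import GRing.Theory.
Local Open Scope ring_scope.

(* Over a finite ring, subspaces of a finite-dimensional space form a finite type
   (via their canonical matrix representation). *)
Module FinVspace.
Import VectorInternalTheory.
HB.instance Definition _ (R : finFieldType) (vT : vectType R) :=
  [Countable of {vspace vT} by <:].
HB.instance Definition _ (R : finFieldType) (vT : vectType R) :=
  [Finite of {vspace vT} by <:].
End FinVspace.
Export FinVspace.

Section NilAlg.
Variables (F : finFieldType) (A : vectType F) (mul : A -> A -> A).

Local Notation fA := (finvect_type A).

Definition lmul_seq (xs : seq A) (a : A) : A := foldr mul a xs.

(* A^k : the span of all products of k elements (k >= 1). *)
Definition apow (k : nat) : {vspace A} :=
  <<[seq lmul_seq (tval xs) (x : A) | x <- enum fA, xs <- enum [pred _ : (k.-1).-tuple fA | true]]>>%VS.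

(* N_k = { a | x_1 ... x_k a = 0 for all x_i }  (N_0 = 0). *)
Definition annN (k : nat) : {vspace A} :=
  <<[seq (a : A) | a <- enum fA & [forall xs : k.-tuple fA, lmul_seq (tval xs) a == 0%R]]>>%VS.

Definition tdim (r : nat) : nat := (\dim (annN r) - \dim (annN r.-1))%N.

Definition is_ideal (U : {vspace A}) : bool :=
  [forall a : fA, forall u : fA, (u \in U) ==> (mul a u \in U)].

Definition num_ideals : nat := #|[set U : {vspace A} | is_ideal U]|.

End NilAlg.

Definition nsub (F : finFieldType) (m : nat) : nat := #|{: {vspace 'rV[F]_m}}|.

(* Main.v *)
Require Import Defs.
From HB Require Import structures.
From mathcomp Require Import all_boot all_order all_algebra all_field zify.
Set Implicit Arguments. Unset Strict Implicit. Unset Printing Implicit Defensive.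
Import GRing.Theory.
Local Open Scope ring_scope.
Section Interval.
Variables (F : finFieldType) (A : vectType F) (C : {vspace A}).

Definition hmap (rw : 'rV[F]_(\dim C)) : A := \sum_i rw 0 i *: (vbasis C)`_i.

Fact hmap_lin : linear hmap.
Proof.
move=> k u v; rewrite /hmap scaler_sumr -big_split; apply: eq_bigr => i _.
by rewrite !mxE scalerDl scalerA.
Qed.
HB.instance Definition _ := GRing.isSemilinear.Build F 'rV[F]_(\dim C) A _ hmap
  (GRing.semilinear_linear hmap_lin).

Lemma hmap_mem x : hmap x \in C.
Proof. by apply: rpred_sum => j _; rewrite rpredZ ?vbasis_mem ?memt_nth. Qed.

Lemma hmap_inj : injective hmap.
Proof.
move=> x y hxy; apply/rowP => j.
have fr := basis_free (vbasisP C).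
rewrite -(coord_sum_free (fun i => x 0 i) j fr) -(coord_sum_free (fun i => y 0 i) j fr).
by move: hxy; rewrite /hmap => ->.
Qed.
End Interval.
Arguments hmap {F A} C rw.

Lemma interval_card (F : finFieldType) (A : vectType F) (V W : {vspace A}) :
  (V <= W)%VS ->
  (nsub F (\dim W - \dim V) <= #|[set U : {vspace A} | (V <= U)%VS && (U <= W)%VS]|)%N.
Proof.
move=> VW; set C := (W :\: V)%VS.
have dC : (\dim W - \dim V)%N = \dim C.
  by rewrite -(dimv_cap_compl W V) (capv_idPr VW) addKn.
rewrite dC /nsub.
pose f := linfun (hmap C).
pose Phi (S : {vspace 'rV[F]_(\dim C)}) := (V + f @: S)%VS.
have CV : forall y, y \in C -> y \in V -> y = 0.
  by move=> y yC yV; apply/eqP; rewrite -memv0 -(capv_diff W V) memv_cap yC yV.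
have Phile : forall S1 S2, (Phi S1 <= Phi S2)%VS -> (S1 <= S2)%VS.
  move=> S1 S2 /subvP hle; apply/subvP => x xS1.
  have: f x \in Phi S2 by apply: hle; rewrite -[f x]add0r memv_add ?mem0v ?memv_img.
  case/memv_addP => v vV [y /memv_imgP [s sS2 ->] eq].
  move: eq; rewrite !lfunE /= => eq.
  have: hmap C (x - s) = 0.
    apply: CV; first exact: hmap_mem.
    by rewrite linearB /= eq addrK.
  rewrite -(linear0 (hmap C)) => /hmap_inj /eqP; rewrite subr_eq0 => /eqP ->.
  exact: sS2.
have Phi_inj : injective Phi.
  by move=> S1 S2 e; apply: subv_anti; rewrite !Phile ?e.
rewrite -(card_imset _ Phi_inj).
apply: subset_leq_card; apply/subsetP => _ /imsetP [S _ ->].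
rewrite inE addvSl subv_add VW /=.
apply/subvP => _ /memv_imgP [s _ ->]; rewrite lfunE /=.
exact: (subvP (diffvSl W V) _ (hmap_mem s)).
Qed.
Section Alg.
Variables (F : finFieldType) (A : vectType F) (mul : A -> A -> A).
Hypotheses (mulC : commutative mul) (mulDl : left_distributive mul +%R)
  (mulZl : forall (k : F) (x y : A), mul (k *: x) y = k *: mul x y).

Lemma mul_lin x k a b : mul x (k *: a + b) = k *: mul x a + mul x b.
Proof. by rewrite mulC mulDl mulZl -!(mulC x). Qed.

Lemma mulx0 x : mul x 0 = 0.
Proof.
have h := mul_lin x 1 0 0; rewrite !scale1r addr0 in h.
by apply: (@addrI _ (mul x 0)); rewrite addr0 -h.
Qed.

Lemma lmul_lin xs k a b :
  lmul_seq mul xs (k *: a + b) = k *: lmul_seq mul xs a + lmul_seq mul xs b.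
Proof. by elim: xs => //= x xs ->; rewrite mul_lin. Qed.

Lemma lmul0 xs : lmul_seq mul xs 0 = 0.
Proof. by elim: xs => //= x xs ->; rewrite mulx0. Qed.

Definition Pk k (a : A) := forall xs : seq A, size xs = k -> lmul_seq mul xs a = 0.

Lemma memN k a : (a \in annN mul k) <-> Pk k a.
Proof.
split.
- move=> ain xs sz.
  rewrite /annN in ain; set s := (X in span X) in ain.
  rewrite (@coord_span _ _ _ (in_tuple s) _ ain).
  apply: (big_ind (fun b => lmul_seq mul xs b = 0)).
  + exact: lmul0.
  + by move=> b c hb hc; rewrite -[b]scale1r lmul_lin hb hc scaler0 addr0.
  move=> i _; rewrite -[_ *: _]addr0 lmul_lin lmul0 addr0.
  have : s`_i \in s by apply: mem_nth.
  case/mapP => b; rewrite mem_filter => /andP [/forallP H _] ->.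
  have := H (Tuple (introT eqP sz)); rewrite /= => /eqP ->.
  by rewrite scaler0.
- move=> H; apply: memv_span; apply/mapP; exists a => //; rewrite mem_filter; apply/andP; split; last first.
    by rewrite (@mem_enum (finvect_type A)).
  by apply/forallP => xs; apply/eqP; apply: H; rewrite size_tuple.
Qed.

Lemma NS k : (annN mul k <= annN mul k.+1)%VS.
Proof.
apply/subvP => a /memN H; apply/memN => [[|x xs]] //= [sz].
by rewrite H // mulx0.
Qed.

Lemma Nmul k x a : a \in annN mul k.+1 -> mul x a \in annN mul k.
Proof.
move/memN => H; apply/memN => xs sz.
rewrite /lmul_seq -[mul x a]/(foldr mul a [:: x]) -foldr_cat.
by apply: H; rewrite size_cat sz addn1.
Qed.

Lemma ideal_between k (U : {vspace A}) :
  (annN mul k <= U)%VS -> (U <= annN mul k.+1)%VS -> is_ideal mul U.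
Proof.
move=> h1 /subvP h2; apply/forallP => x; apply/forallP => u; apply/implyP => uU.
exact: (subvP h1) (Nmul x (h2 _ uU)).
Qed.

Definition setn n := [set U : {vspace A} | is_ideal mul U && (U <= annN mul n)%VS].

Lemma main_ind n :
  (nsub F (tdim mul 1) + \sum_(2 <= r < n.+2) (nsub F (tdim mul r) - 1)
     <= #|setn n.+1|)%N.
Proof.
elim: n => [|n IH].
  rewrite big_geq // addn0.
  apply: leq_trans (interval_card (NS 0)) _.
  apply: subset_leq_card; apply/subsetP => U; rewrite !inE => /andP [h1 h2].
  by rewrite h2 andbT (ideal_between h1 h2).
rewrite big_nat_recr //=.
set I := [set U : {vspace A} | (annN mul n.+1 <= U)%VS && (U <= annN mul n.+2)%VS].
have hI := interval_card (NS n.+1).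
have NI : annN mul n.+1 \in I by rewrite inE subvv NS.
have sub : setn n.+1 :|: (I :\ annN mul n.+1) \subset setn n.+2.
  apply/subsetP => U; rewrite !inE => /orP [/andP [-> h] | /andP [_ /andP [h1 h2]]].
    by apply: subv_trans h (NS _).
  by rewrite h2 andbT (ideal_between h1 h2).
have dis : [disjoint setn n.+1 & I :\ annN mul n.+1].
  rewrite -setI_eq0; apply/eqP/setP => U; rewrite !inE.
  apply/negbTE; apply/negP => /and3P [/andP [_ h] ne /andP [h1 _]].
  by move/negP: ne; apply; apply/eqP; apply: subv_anti; rewrite h h1.
have hU := subset_leq_card sub.
move: dis; rewrite -setI_eq0 => /eqP dis.
have := cardsUI (setn n.+1) (I :\ annN mul n.+1); rewrite dis cards0 addn0 => hc.
have := cardsD1 (annN mul n.+1) I; rewrite NI => hd.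
have -> : tdim mul n.+2 = (\dim (annN mul n.+2) - \dim (annN mul n.+1))%N by [].
rewrite -/I in hI; simpl in hd.
rewrite addnA; apply: leq_trans hU; rewrite hc leq_add //.
by rewrite leq_subLR -hd.
Qed.
End Alg.
Theorem proposition3p1 (p : nat) (hp : prime p) (A : vectType 'F_p)
    (mul : A -> A -> A)
    (mulC : commutative mul) (mulA : associative mul)
    (mulDl : left_distributive mul +%R)
    (mulZl : forall (k : 'F_p) (x y : A), mul (k *: x) y = k *: mul x y)
    (A_nz : (fullv : {vspace A}) != 0%VS)
    (e : nat) (e_gt0 : (0 < e)%N)
    (Ae_nz : apow mul e != 0%VS) (Ae1_0 : apow mul e.+1 = 0%VS) :
  (nsub 'F_p (tdim mul 1)
     + \sum_(2 <= r < e.+1) (nsub 'F_p (tdim mul r) - 1)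
   <= num_ideals mul)%N.
Proof.
have := main_ind mulC mulDl mulZl e.-1; rewrite prednK // => h.
apply: leq_trans h _; apply: subset_leq_card; apply/subsetP => U.
by rewrite !inE => /andP [].
Qed.
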